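(* Let $k\ge 2$ and let $\alpha_1,\dots,\alpha_k$ be nonnegative rational numbers such that the sum of any $k-1$ of them is at most $1$ and $\alpha_1+\cdots+\alpha_k>1$. For every integer $g\ge 0$, the number $f(g)$ of $\alpha$-communal $k$-tuples whose entries sum to $g$ equals \[ f(g)=\binom{\sum_{i=1}^k \lfloor \alpha_i g\rfloor - g + k-1}{k-1}, \] where, as usual, $\binom{n}{r}=0$ for integers $0\le n<r$.
   Context: A $k$-tuple $[g_1,\dots,g_k]$ of integers is called $\alpha$-communal (for $\alpha=(\alpha_1,\dots,\alpha_k)$) if $0\le g_i\le \alpha_i\sum_{j=1}^k g_j$ for every $i$. For an integer $g\ge 0$, $f(g)$ denotes the number of $\alpha$-communal $k$-tuples $[g_1,\dots,g_k]$ with $\sum_i g_i=g$. *)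

(* Defs.v *)
From HB Require Import structures.
From mathcomp Require Import all_boot all_order all_algebra.
Set Implicit Arguments. Unset Strict Implicit. Unset Printing Implicit Defensive.
Import Order.TTheory GRing.Theory Num.Theory.

Definition communal (k : nat) (alpha : 'I_k -> rat) (t : 'I_k -> nat) : bool :=
  [forall i, ((t i)%:R <= alpha i * (\sum_(j < k) t j)%:R)%R].

(* f(g): the number of alpha-communal k-tuples with entry sum g.
   Entries are bounded by g, so tuples are enumerated as finite functions
   'I_k -> 'I_(g.+1). *)
Definition f_count (k : nat) (alpha : 'I_k -> rat) (g : nat) : nat :=
  #|[set t : {ffun 'I_k -> 'I_g.+1} |
      ((\sum_(i < k) (t i : nat)) == g) && communal alpha (fun i => t i)]|.

(* Main.v *)
Require Import Defs.
From HB Require Import structures.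
From mathcomp Require Import all_boot all_order all_algebra zify.
Import Order.TTheory GRing.Theory Num.Theory.
Set Implicit Arguments. Unset Strict Implicit.
Lemma count_bounded m (a : 'I_m.+1 -> nat) g
  (H1 : forall i, \sum_(j | j != i) a j <= g) (m0 : 0 < m) :
  #|[set t : {ffun 'I_m.+1 -> 'I_g.+1} |
     (\sum_(i < m.+1) (t i : nat) == g) && [forall i, t i <= a i]]|
  = 'C(\sum_i a i + m - g, m).
Proof.
set A := \sum_i a i.
have splitA i : A = a i + \sum_(j | j != i) a j by rewrite /A (bigD1 i).
have [leAg|ltAg] := leqP g A; last first.
  rewrite bin_small; last by lia.
  apply/eqP; rewrite cards_eq0; apply/eqP/setP => t; rewrite !inE.
  apply/negbTE/negP => /andP[/eqP Hs /forallP Ht].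
  have : \sum_(i < m.+1) (t i : nat) <= A by apply: leq_sum => i _; exact: Ht.
  by rewrite Hs; lia.
set D := A - g.
have -> : A + m - g = m + D by rewrite /D; lia.
rewrite -card_ord_partitions.
pose phi (t : {ffun 'I_m.+1 -> 'I_g.+1}) : m.+1.-tuple 'I_D.+1 :=
  [tuple (inord (a i - t i) : 'I_D.+1) | i < m.+1].
set S := [set t : {ffun 'I_m.+1 -> 'I_g.+1} | _].
have bnd t i : t \in S -> a i - t i <= D.
  rewrite inE => /andP[/eqP Hs /forallP Ht].
  have e : \sum_(j < m.+1) (t j : nat) = t i + \sum_(j | j != i) (t j : nat)
    by rewrite (bigD1 i).
  have : \sum_(j | j != i) (t j : nat) <= \sum_(j | j != i) a j
    by apply: leq_sum => j _; exact: Ht.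
  move: e; rewrite Hs => e; have := Ht i; have := splitA i; rewrite /D; lia.
rewrite -(card_in_imset (f := phi)); last first.
  move=> t1 t2 h1 h2 /= E; apply/ffunP => i.
  have := congr1 (fun u => val (tnth u i)) E.
  rewrite /phi !tnth_mktuple /= !inordK ?ltnS ?bnd //.
  move: h1 h2; rewrite !inE => /andP[_ /forallP /(_ i) ?] /andP[_ /forallP /(_ i) ?].
  move=> e; apply: val_inj => /=; lia.
congr #|pred_of_set _|; apply/setP => u; rewrite inE.
apply/imsetP/idP.
  case=> t tS ->.
  have tS' := tS; move: tS'; rewrite inE => /andP[/eqP Hs /forallP Ht].
  rewrite big_tuple.
  under eq_bigr => i _ do rewrite /phi tnth_mktuple /= inordK ?ltnS ?bnd //.
  have e : \sum_(i < m.+1) (a i - t i) + \sum_(i < m.+1) (t i : nat) = A.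
    rewrite -big_split /=; apply: eq_bigr => i _; rewrite subnK //; exact: Ht.
  move: e; rewrite Hs => e; apply/eqP; rewrite /D -e addnK; by apply: eq_bigr.
move=> /eqP Hu; rewrite big_tuple in Hu.
have ule i : (tnth u i : nat) <= a i.
  have := H1 i; have := splitA i; have := ltn_ord (tnth u i); rewrite /D; lia.
have e : \sum_(i < m.+1) (a i - tnth u i) + \sum_(i < m.+1) (tnth u i : nat) = A.
  rewrite -big_split /=; apply: eq_bigr => i _; rewrite subnK //.
have sg : \sum_(i < m.+1) (a i - tnth u i) = g by move: e; rewrite Hu /D; lia.
have tg i : a i - tnth u i < g.+1.
  rewrite ltnS -sg (bigD1 i) //=; exact: leq_addr.
exists [ffun i => (inord (a i - tnth u i) : 'I_g.+1)].
  rewrite inE; apply/andP; split.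
    apply/eqP; apply: etrans sg; apply: eq_bigr => i _; rewrite ffunE inordK //.
  apply/forallP => i; rewrite ffunE inordK //; exact: leq_subr.
apply: eq_from_tnth => i; rewrite /phi tnth_mktuple; apply: val_inj => /=.
rewrite ffunE inordK ?tg // inordK ?tg // subKn ?ule // inordK //.
Qed.

Theorem mainTheorem1 (k : nat) (alpha : 'I_k -> rat)
  (hk : (2 <= k)%N)
  (hnn : forall i, (0 <= alpha i)%R)
  (hsub : forall i0 : 'I_k, (\sum_(i < k | i != i0) alpha i <= 1)%R)
  (hsum : (1 < \sum_(i < k) alpha i)%R) :
  forall g : nat,
    let N : int := (\sum_(i < k) Num.floor (alpha i * g%:R) - g%:Z + (k - 1)%:Z)%R in
    (0 <= N)%R /\ f_count alpha g = 'C(`|N|%N, k - 1).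
Proof.
case: k alpha hk hnn hsub hsum => [|m] // alpha hk hnn hsub hsum g N.
have m0 : (0 < m)%N by [].
pose F i := Num.floor (alpha i * g%:R).
pose a i := `|F i|%N.
have aF i : F i = Posz (a i).
  rewrite /a gez0_abs // floor_ge0 mulr_ge0 //.
have le_a i : ((a i)%:R <= alpha i * g%:R :> rat)%R.
  have := floor_le (alpha i * g%:R); by rewrite -/(F i) aF.
have lt_a i : (alpha i * g%:R < (a i)%:R + 1 :> rat)%R.
  have := floorD1_gt (alpha i * g%:R); by rewrite -/(F i) aF intrD.
have H1 i : (\sum_(j | j != i) a j <= g)%N.
  rewrite -(ler_nat rat) natr_sum.
  apply: (le_trans (y := ((\sum_(j | j != i) alpha j) * g%:R)%R)).
    by rewrite mulr_suml; apply: ler_sum => j _.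
  by rewrite -{2}[(g%:R)%R]mul1r ler_wpM2r.
set A := \sum_i a i.
have H2 : (g < A + m.+1)%N.
  rewrite -(ltr_nat rat).
  apply: (le_lt_trans (y := ((\sum_i alpha i) * g%:R)%R)).
    by rewrite -{1}[(g%:R)%R]mul1r ler_wpM2r // ltW.
  have -> : ((A + m.+1)%:R = \sum_i ((a i)%:R + 1) :> rat)%R.
    by rewrite big_split /= sumr_const card_ord natrD natr_sum.
  rewrite mulr_suml.
  apply: ltr_sum => [|i _]; last exact: lt_a.
  by apply/hasP; exists ord0; rewrite ?mem_index_enum.
have sumF : (\sum_(i < m.+1) F i = Posz A)%R.
  rewrite /A; elim/big_rec2: _ => // i x y _ ->; by rewrite aF PoszD.
have eN : N = Posz (A + m - g).
  rewrite /N sumF /=; rewrite subn1 /=; lia.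
split; first by rewrite eN.
rewrite eN absz_nat /= subn1 /= -count_bounded //.
rewrite /f_count; apply: eq_card => t; rewrite !inE.
case: eqP => //= Hs; rewrite /communal; apply: eq_forallb => i.
rewrite Hs -lez_nat -aF floor_ge_int; done.
Qed.
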